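(* Let $G$ be a finite simple graph without isolated vertices and let $f=(V_0,V_1,V_2)$ be a $\gamma_{tR}(G)$-function. Then $\gamma_{tR}(G)\ge |V(G)|-(\Delta(G)-2)|V_2|$ and $|V_2|\ge \frac{|V(G)|-|V_1|}{\Delta(G)}$. Moreover, if in addition $|V(G)|=\Delta(G)|V_2|+|V_1|$, then $\gamma_{tR}(G)=|V(G)|-(\Delta(G)-2)|V_2|$.
   Context: $\Delta(G)$ denotes the maximum degree of $G$. A total Roman dominating function on $G$ is a map $f:V(G)\to\{0,1,2\}$, written $f=(V_0,V_1,V_2)$ with $V_i=\{v:f(v)=i\}$, such that every vertex of $V_0$ has a neighbor in $V_2$ and the subgraph induced by $V_1\cup V_2$ has no isolated vertices; $\gamma_{tR}(G)$ is the minimum of $\sum_v f(v)$ over such $f$, and a $\gamma_{tR}(G)$-function is one attaining this minimum. *)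

(* Defs.v *)
From mathcomp Require Import all_boot all_order all_algebra.
Set Implicit Arguments. Unset Strict Implicit. Unset Printing Implicit Defensive.

Definition simple_graph (T : finType) (e : rel T) : Prop :=
  symmetric e /\ irreflexive e.

Definition no_isolated (T : finType) (e : rel T) : Prop :=
  forall v : T, exists u : T, e v u.

Definition deg (T : finType) (e : rel T) (v : T) : nat := #|[set u | e v u]|.

Definition maxdeg (T : finType) (e : rel T) : nat := \max_(v : T) deg e v.

Definition Vset (T : finType) (f : T -> nat) (i : nat) : {set T} :=
  [set v | f v == i].

Definition weight (T : finType) (f : T -> nat) : nat := \sum_(v : T) f v.

Definition is_TRDF (T : finType) (e : rel T) (f : T -> nat) : Prop :=
  (forall v, f v <= 2) /\
  (forall v, f v = 0 -> exists u, e v u /\ f u = 2) /\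
  (forall v, 0 < f v -> exists u, e v u /\ 0 < f u).

(* a gamma_tR(G)-function: a TRDF of minimum weight; its weight is gamma_tR(G) *)
Definition is_gtR_function (T : finType) (e : rel T) (f : T -> nat) : Prop :=
  is_TRDF e f /\ forall g : T -> nat, is_TRDF e g -> weight f <= weight g.

(* Main.v *)
Require Import Defs.
From mathcomp Require Import all_boot all_order all_algebra.
From mathcomp Require Import lra.
Import Order.TTheory GRing.Theory Num.Theory.

Lemma cardV (T : finType) (f : T -> nat) i :
  #|Vset f i| = \sum_(v : T) (f v == i : nat).
Proof.
rewrite -sum1_card big_mkcond /=; apply: eq_bigr => v _.
by rewrite /Vset inE; case: (f v == i).
Qed.

Lemma key (T : finType) (e : rel T) (f : T -> nat) :
  simple_graph e -> is_TRDF e f ->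
  #|Vset f 0| + #|Vset f 2| <= maxdeg e * #|Vset f 2|.
Proof.
move=> [esym eirr] [f2 [f0 fpos]].
set V0 := Vset f 0; set V2 := Vset f 2.
have step1 : #|V0| <= \sum_(v in V0) \sum_(w in V2) (e v w : nat).
  rewrite -sum1_card; apply: leq_sum => v.
  rewrite /V0 /Vset inE => /eqP /f0 [u [evu fu]].
  rewrite (bigD1 u) /=; last by rewrite /V2 /Vset inE fu.
  by rewrite evu.
have step2 : \sum_(v in V0) \sum_(w in V2) (e v w : nat)
    = \sum_(w in V2) #|[pred v | (v \in V0) && e w v]|.
  rewrite exchange_big; apply: eq_bigr => w _.
  rewrite -sum1_card [RHS]big_mkcond /= big_mkcond /=; apply: eq_bigr => v _.
  rewrite (esym v w) !inE /=. by case: (f v == 0); case: (e w v).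
have step3 : forall w, w \in V2 -> #|[pred v | (v \in V0) && e w v]| + 1 <= maxdeg e.
  move=> w; rewrite /V2 /Vset inE => /eqP fw.
  have [u [ewu fu]] : exists u, e w u /\ 0 < f u by apply: fpos; rewrite fw.
  have hd : deg e w <= maxdeg e by rewrite /maxdeg; exact: (leq_bigmax w).
  apply: leq_trans hd; rewrite /deg (cardsD1 u) inE ewu addnC add1n ltnS.
  apply: subset_leq_card; apply/subsetP => v; rewrite !inE => /andP [].
  move=> /eqP fv ->; rewrite andbT.
  by apply/eqP => vu; move: fu; rewrite -vu fv.
have h : \sum_(w in V2) (#|[pred v | (v \in V0) && e w v]| + 1) <= \sum_(w in V2) maxdeg e by apply: leq_sum.
move: h; rewrite big_split /= sum1_card sum_nat_const => h.
rewrite mulnC; apply: leq_trans h; rewrite leq_add2r -step2 //.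
Qed.

Theorem theorem4p1 (T : finType) (e : rel T) (f : T -> nat) :
  simple_graph e -> no_isolated e -> is_gtR_function e f ->
  let n := #|T| in
  let D := maxdeg e in
  let n1 := #|Vset f 1| in
  let n2 := #|Vset f 2| in
  [/\ ((weight f)%:Q >= n%:Q - (D%:Q - 2) * n2%:Q)%R,
      (n2%:Q >= (n%:Q - n1%:Q) / D%:Q)%R
    & n = D * n2 + n1 -> ((weight f)%:Q = n%:Q - (D%:Q - 2) * n2%:Q)%R].
Proof.
move=> hs _ [htr _] n D n1 n2.
have hk := @key T e f hs htr.
have f2 := htr.1.
have hw : weight f = n1 + 2 * n2.
  rewrite /weight /n1 /n2 !cardV big_distrr /= -big_split /=.
  apply: eq_bigr => v _; move: (f2 v); case: (f v) => [|[|[|k]]] //.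
have hn : n = #|Vset f 0| + n1 + n2.
  rewrite /n /n1 /n2 !cardV -!big_split /= -sum1_card.
  apply: eq_bigr => v _; move: (f2 v); case: (f v) => [|[|[|k]]] //.
set n0 := #|Vset f 0| in hk hn.
have hkQ : ((n0%:R : rat) + n2%:R <= D%:R * n2%:R)%R.
  by rewrite -natrD -natrM ler_nat.
have hnQ : ((n%:R : rat) = n0%:R + n1%:R + n2%:R)%R by rewrite hn !natrD.
have hwQ : (((weight f)%:R : rat) = n1%:R + 2 * n2%:R)%R by rewrite hw natrD natrM.
have c : forall m : nat, ((m%:~R : rat) = m%:R)%R by move=> m; rewrite pmulrn.
rewrite !c.
split.
- rewrite hwQ hnQ. lra.
- have [D0|Dpos] := posnP D.
    by rewrite D0 invr0 mulr0 ler0n.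
  rewrite ler_pdivrMr ?ltr0n // [X in (_ <= X)%R]mulrC hnQ. lra.
- move=> hE.
  have hEQ : ((n%:R : rat) = D%:R * n2%:R + n1%:R)%R by rewrite -natrM -natrD; apply/eqP; rewrite eqr_nat; apply/eqP; exact: hE.
  rewrite hwQ hEQ; lra.
Qed.
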